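(* Let $\alpha<0<\beta$ and $\theta^*=\beta/(\beta-\alpha)\in(0,1)$. Then for every $\theta\in[0,1]$ with $\theta\neq\theta^*$, $E_{\theta^*}\succ E_\theta$; that is, with $\theta_1=\theta$ and $\theta_2=\theta^*$, for every $p^0\in L^1([0,1])$ with $p^0\ge0$ and $\int_0^1p^0\,dx=1$, \[ \pi_1[p^0]<\int_0^1x\,p^0(x)\,dx . \]
   Context: An $E_\theta$-strategist ($\theta\in[0,1]$) plays pure strategy I with probability $\theta$ and pure strategy II with probability $1-\theta$ in a two-strategy game (Moran process) between $E_{\theta_1}$ and $E_{\theta_2}$ strategists, with payoffs scaled as $(A,B,C,D)=(1,1,1,1)+\frac1N(a,b,c,d)+o(1/N)$ and $\alpha=a-c$, $\beta=b-d$. In the associated large-population (thermodynamical) limit, with $x$ the fraction of $E_{\theta_1}$ strategists and $p^0$ the initial density of $x$, the fixation probability of the $E_{\theta_1}$ type is \[ \pi_1[p^0]=\frac{\int_0^1p^0(x)\int_0^xF_{(\theta_1,\theta_2)}(y)\,dy\,dx}{\int_0^1F_{(\theta_1,\theta_2)}(y)\,dy},\qquad F_{(\theta_1,\theta_2)}(y)=\exp\!\Big(-y^2(\theta_1-\theta_2)^2\tfrac{\alpha-\beta}{2}-y(\theta_1-\theta_2)\big(\theta_2\alpha+(1-\theta_2)\beta\big)\Big). \] In the neutral case $\theta_1=\theta_2$ this equals $\pi_1^{\rm N}[p^0]=\int_0^1xp^0(x)\,dx$. Definition: $E_{\theta_2}\succ E_{\theta_1}$ ($E_{\theta_2}$ dominates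 $E_{\theta_1}$) if for every nontrivial initial condition $p^0$ the fixation probability $\pi_1[p^0]$ of the $E_{\theta_1}$ type is strictly smaller than the neutral value $\int_0^1xp^0(x)\,dx$. *)

(* Defs.v *)
From HB Require Import structures.
From mathcomp Require Import all_boot all_order all_algebra.
From mathcomp Require Import all_classical all_reals all_analysis.
Set Implicit Arguments. Unset Strict Implicit. Unset Printing Implicit Defensive.
Import Order.TTheory GRing.Theory Num.Theory.
Import numFieldNormedType.Exports.
Local Open Scope classical_set_scope.
Local Open Scope ring_scope.

Definition Fth {R : realType} (alpha beta th1 th2 : R) (y : R) : R :=
  expR (- (y ^+ 2 * (th1 - th2) ^+ 2 * ((alpha - beta) / 2))
        - y * (th1 - th2) * (th2 * alpha + (1 - th2) * beta)).

Definition pi1 {R : realType} (alpha beta th1 th2 : R) (p0 : R -> R) : R :=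
  Rintegral lebesgue_measure `[0%R, 1%R]
     (fun x => p0 x * Rintegral lebesgue_measure `[0, x] (Fth alpha beta th1 th2))
  / Rintegral lebesgue_measure `[0%R, 1%R] (Fth alpha beta th1 th2).

Definition pi1_neutral {R : realType} (p0 : R -> R) : R :=
  Rintegral lebesgue_measure `[0%R, 1%R] (fun x => x * p0 x).

(* Main.v *)
Require Import Defs.
From HB Require Import structures.
From mathcomp Require Import all_boot all_order all_algebra.
From mathcomp Require Import all_classical all_reals all_analysis.
From mathcomp Require Import lra ring measurable_realfun.
Import Order.TTheory GRing.Theory Num.Theory.
Import numFieldNormedType.Exports.
Local Open Scope classical_set_scope.
Local Open Scope ring_scope.

Section K.
Context (R : realType).
Notation mu := (@lebesgue_measure R).

Lemma bnd1 (D : set R) (k : R -> R) : (forall x, D x -> `|k x| <= 1) ->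
  [bounded k x | x in D].
Proof.
move=> Hk; rewrite /bounded_near; near=> M => t At /=.
apply: le_trans (Hk t At) _; near: M; exact: nbhs_pinfty_ge.
Unshelve. all: end_near. Qed.

Lemma intM (D : set R) (p0 k : R -> R) : measurable D ->
  mu.-integrable D (EFin \o p0) -> measurable_fun D k ->
  (forall x, D x -> `|k x| <= 1) ->
  mu.-integrable D (EFin \o (fun x => p0 x * k x)).
Proof.
move=> mD ip mk kb.
have -> : EFin \o (fun x => p0 x * k x) = ((EFin \o p0) \* (EFin \o k))%E.
  by apply: funext => x /=; rewrite EFinM.
by apply: integrableMl => //; exact: bnd1.
Qed.

Local Open Scope ereal_scope.
Lemma itv_cc_oo (f : R -> \bar R) : measurable_fun (`[(0%R:R), 1%R] : set R) f ->
  (\int[mu]_(x in `[(0%R:R), 1%R]) f x = \int[mu]_(x in `](0%R:R), 1%R[) f x).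
Proof.
move=> mf.
rewrite integral_itv_bndo_bndc; last first.
  apply: measurable_funS mf => // x /=; rewrite !in_itv /= => /andP[? ?].
  by apply/andP; split; exact: ltW.
symmetry; apply: integral_itv_obnd_cbnd.
by apply: measurable_funS mf => //; apply: subset_itvr; rewrite bnd_simp.
Qed.
Local Close Scope ereal_scope.

Lemma key (p0 g : R -> R) :
  mu.-integrable `[0%R, 1%R] (EFin \o p0) ->
  (forall x, x \in `[0%R, 1%R] -> 0 <= p0 x) ->
  (\int[mu]_(x in `[0%R, 1%R]) (p0 x)%:E = 1%:E)%E ->
  measurable_fun (`[0%R, 1%R]%classic : set R) g ->
  (forall x, 0 <= x <= 1 -> 0 <= g x <= 1) ->
  (forall x, 0 < x < 1 -> g x < x) -> g 0 = 0 ->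
  Rintegral mu `[0%R, 1%R] (fun x => p0 x * g x) <
  Rintegral mu `[0%R, 1%R] (fun x => x * p0 x).
Proof.
move=> ip p0ge0 p01 mg g01 gx gz.
have Dx (x : R) : (`[0%R, 1%R]%classic : set R) x -> 0 <= x <= 1 by rewrite /= in_itv.
have ig : mu.-integrable `[0%R, 1%R] (EFin \o (fun x => p0 x * g x)).
  apply: intM => // x /Dx /g01 /andP[g0 g1]; rewrite ger0_norm //.
have ix : mu.-integrable `[0%R, 1%R] (EFin \o (fun x => x * p0 x)).
  have -> : (fun x => x * p0 x) = (fun x => p0 x * id x).
    by apply: funext => x; rewrite mulrC.
  apply: intM => //.
  by move=> x /Dx /andP[x0 x1]; rewrite ger0_norm.
rewrite -subr_gt0 -RintegralB //.
pose h := fun x : R => x * p0 x - p0 x * g x.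
have h0 (x : R) : (`[0%R, 1%R]%classic : set R) x -> 0 <= h x.
  move=> xD; rewrite /h [x * _]mulrC -mulrBr mulr_ge0 //; first exact: p0ge0 xD.
  case/Dx/andP: xD => x0 x1; have [->|x0'] := eqVneq x 0.
    by rewrite gz subrr.
  have [->|x1'] := eqVneq x 1.
    by have := g01 1; rewrite lexx ler01 /= => /(_ isT) /andP[? ?]; lra.
  rewrite subr_ge0; apply: ltW; apply: gx.
  by rewrite !lt_neqAle x0 x1 andbT eq_sym x0' x1'.
have ih : mu.-integrable `[0%R, 1%R] (EFin \o h).
  have -> : EFin \o h = ((EFin \o (fun x => x * p0 x)%R) \- (EFin \o (fun x => p0 x * g x)%R))%E.
    by apply: funext => x /=; rewrite /h EFinB.
  exact: integrableB.
rewrite lt_def Rintegral_ge0 // andbT; apply/negP => /eqP H0.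
have I0 : (\int[mu]_(x in `[0%R, 1%R]) (EFin \o h) x = 0)%E.
  have fin : (\int[mu]_(x in `[0%R, 1%R]) (EFin \o h) x \is a fin_num)%E.
    by apply: integrable_fin_num.
  by rewrite -(fineK fin); move: H0; rewrite /Rintegral => ->.
have mh : measurable_fun (`[0%R, 1%R]%classic : set R) (EFin \o h).
  exact: (measurable_int _ ih).
have A : (\int[mu]_(x in `[0%R, 1%R]) `|(EFin \o h) x| = 0)%E.
  rewrite -I0; apply: eq_integral => x xD; rewrite gee0_abs // lee_fin h0 //.
  exact: set_mem.
have ae := (ae_eq_integral_abs mu (measurable_itv _) mh).1 A.
have ae2 : ae_eq mu (`]0%R, 1%R[%classic : set R) (EFin \o p0) (cst 0%E).
  apply: filterS ae => x Hx xo.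
  have xD : (`[0%R, 1%R]%classic : set R) x.
    move: xo; rewrite /= !in_itv /= => /andP[? ?]; apply/andP; split; exact: ltW.
  have := Hx xD; rewrite /= => -[] hx0.
  have xo' : 0 < x < 1 by move: xo; rewrite /= in_itv.
  have := gx _ xo'; rewrite -subr_gt0 => gp.
  move: hx0; rewrite /h [x * _]mulrC -mulrBr => /eqP; rewrite mulf_eq0.
  by rewrite (gt_eqF gp) orbF => /eqP ->.
have mp : measurable_fun (`[0%R, 1%R]%classic : set R) (EFin \o p0).
  exact: (measurable_int _ ip).
move: p01; rewrite itv_cc_oo //.
rewrite (ae_eq_integral (cst 0%E) _ _ _ _ ae2) //.
- rewrite integral0 => /esym /eqP; rewrite eqe. by rewrite oner_eq0.
- apply: measurable_funS mp => // x /=; rewrite !in_itv /= => /andP[? ?].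
  by apply/andP; split; exact: ltW.
Qed.
End K.

Section S.
Context (R : realType) (F : R -> R).
Hypothesis Fc : continuous F.
Hypothesis Fpos : forall y, 0 < F y.
Hypothesis Finc : forall x y, 0 <= x -> x < y -> F x < F y.
Notation mu := (@lebesgue_measure R).

Lemma Fle x y : 0 <= x -> x <= y -> F x <= F y.
Proof. move=> x0; rewrite le_eqVlt => /predU1P[->//|xy]; exact/ltW/Finc. Qed.

Lemma intF (a b : R) : mu.-integrable `[a, b] (EFin \o F).
Proof.
apply: continuous_compact_integrable; first exact: segment_compact.
by move=> x; apply: continuous_subspaceT.
Qed.

Lemma intF_oc (a b : R) : mu.-integrable `]a, b] (EFin \o F).
Proof.
apply: integrableS (intF a b) => //; apply: subset_itvr; by rewrite bnd_simp.
Qed.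

Definition G x := Rintegral mu `[0, x] F.

Lemma Gdiff a b : 0 <= a -> a <= b -> G b - G a = Rintegral mu `]a, b] F.
Proof.
move=> a0 ab; rewrite /G; apply: Rintegral_itvB; first exact: intF.
  by rewrite bnd_simp.
by rewrite bnd_simp.
Qed.

Lemma Rint_le_cst (D : set R) c : measurable D -> (mu D < +oo)%E ->
  mu.-integrable D (EFin \o F) -> (forall x, D x -> F x <= c) ->
  Rintegral mu D F <= c * fine (mu D).
Proof.
move=> mD Dfin iF Fc'; rewrite -Rintegral_cst//; apply: le_Rintegral => //.
apply/integrableP; split; first exact: measurable_cst.
by rewrite integral_cst// ltey_eq /= ?fin_numM // ge0_fin_numE.
Qed.

Lemma mu_cc (a b : R) : a <= b -> mu `[a, b] = (b - a)%:E.
Proof.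
move=> ab; rewrite lebesgue_measure_itv /= lte_fin.
have [ab'|ab'] := ltP a b; first by rewrite -EFinD.
have -> : a = b by apply/eqP; rewrite eq_le ab ab'.
by rewrite subrr.
Qed.

Lemma mu_oc (a b : R) : a <= b -> mu `]a, b] = (b - a)%:E.
Proof.
move=> ab; rewrite lebesgue_measure_itv /= lte_fin.
have [ab'|ab'] := ltP a b; first by rewrite -EFinD.
have -> : a = b by apply/eqP; rewrite eq_le ab ab'.
by rewrite subrr.
Qed.

Lemma Rint_ge_cst (D : set R) c : measurable D -> (mu D < +oo)%E ->
  mu.-integrable D (EFin \o F) -> (forall x, D x -> c <= F x) ->
  c * fine (mu D) <= Rintegral mu D F.
Proof.
move=> mD Dfin iF Fc'; rewrite -Rintegral_cst//; apply: le_Rintegral => //.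
apply/integrableP; split; first exact: measurable_cst.
by rewrite integral_cst// ltey_eq /= ?fin_numM // ge0_fin_numE.
Qed.

Lemma G_le a : 0 <= a -> G a <= a * F a.
Proof.
move=> a0; rewrite mulrC; have := @Rint_le_cst `[0, a] (F a).
rewrite mu_cc // subr0 /=; apply => //; first exact: ltry.
  exact: intF.
move=> x; rewrite /= in_itv /= => /andP[x0 xa]; exact: Fle.
Qed.

Lemma Gdiff_ge a b : 0 <= a -> a <= b -> (b - a) * F a <= G b - G a.
Proof.
move=> a0 ab; rewrite Gdiff // mulrC; have := @Rint_ge_cst `]a, b] (F a).
rewrite mu_oc //=; apply => //; first exact: ltry.
  exact: intF_oc.
move=> x; rewrite /= in_itv /= => /andP[ax xb]; apply: Fle => //; exact: ltW.
Qed.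

Lemma Gdiff_le a b : 0 <= a -> a <= b -> G b - G a <= (b - a) * F b.
Proof.
move=> a0 ab; rewrite Gdiff // mulrC; have := @Rint_le_cst `]a, b] (F b).
rewrite mu_oc //=; apply => //; first exact: ltry.
  exact: intF_oc.
move=> x; rewrite /= in_itv /= => /andP[ax xb]; apply: Fle => //.
by rewrite (le_trans a0) // ltW.
Qed.

Lemma G_lt a : 0 < a -> G a < a * F a.
Proof.
move=> a0.
have h0 : 0 <= a / 2 by rewrite divr_ge0 // ltW.
have h1 : a / 2 <= a by rewrite ler_pdivrMr // ler_peMr // ?ltW //; lra.
have e1 := G_le _ h0; have e2 := Gdiff_le _ _ h0 h1.
have e3 : F (a / 2) < F a by apply: Finc => //; rewrite ltr_pdivrMr //; lra.
have e4 : a / 2 * F (a / 2) < a / 2 * F a by rewrite ltr_pM2l // divr_gt0.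
have e5 : a - a / 2 = a / 2 by rewrite {1}(splitr a) addrK.
rewrite e5 in e2.
have e6 : a * F a = a / 2 * F a + a / 2 * F a by rewrite -mulrDl -splitr.
lra.
Qed.

Lemma G_ge0 x : 0 <= G x.
Proof. by apply: Rintegral_ge0 => y _; exact: ltW. Qed.

Lemma G1_pos : 0 < G 1.
Proof.
have := Gdiff_ge _ _ (lexx 0) ler01; have := G_ge0 0; have := Fpos 0.
rewrite subr0 mul1r; lra.
Qed.

Lemma G_mono : nondecreasing_fun G.
Proof.
move=> x y xy; have [x0|x0] := ltP x 0.
  rewrite /G set_itv_ge ?Rintegral_set0 ?G_ge0 // bnd_simp -ltNge //.
have := Gdiff_ge _ _ x0 xy; have : 0 <= (y - x) * F x.
  by rewrite mulr_ge0 ?subr_ge0 // ltW.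
lra.
Qed.

Lemma G_conv x : 0 < x < 1 -> G x < x * G 1.
Proof.
case/andP=> x0 x1.
have h1 := G_lt _ x0; have h2 := Gdiff_ge _ _ (ltW x0) (ltW x1).
have A : x * ((1 - x) * F x) <= x * (G 1 - G x) by rewrite ler_wpM2l // ltW.
have B : (1 - x) * G x < (1 - x) * (x * F x) by rewrite ltr_pM2l // subr_gt0.
have e1 : x * ((1 - x) * F x) = (1 - x) * (x * F x) by ring.
have e2 : x * (G 1 - G x) = x * G 1 - x * G x by ring.
have e3 : (1 - x) * G x = G x - x * G x by ring.
lra.
Qed.

Lemma main_sec (p0 : R -> R) :
  mu.-integrable `[0%R, 1%R] (EFin \o p0) ->
  (forall x, x \in `[0%R, 1%R] -> 0 <= p0 x) ->
  (\int[mu]_(x in `[0%R, 1%R]) (p0 x)%:E = 1%:E)%E ->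
  Rintegral mu `[0%R, 1%R] (fun x => p0 x * G x) / G 1 <
  Rintegral mu `[0%R, 1%R] (fun x => x * p0 x).
Proof.
move=> ip p0ge0 p01.
have G1p := G1_pos.
pose g := fun x => G x / G 1.
have mg : measurable_fun (`[0%R, 1%R]%classic : set R) g.
  apply: nondecreasing_measurable => // x y xy.
  by rewrite /g ler_pM2r ?invr_gt0 // G_mono.
have g01 x : 0 <= x <= 1 -> 0 <= g x <= 1.
  case/andP=> x0 x1; rewrite /g divr_ge0 ?G_ge0 ?(ltW G1p) //=.
  by rewrite ler_pdivrMr // mul1r G_mono.
have gx x : 0 < x < 1 -> g x < x.
  by move=> hx; rewrite /g ltr_pdivrMr // G_conv.
have gz : g 0 = 0.
  by rewrite /g /G set_itv1 Rintegral_set1 mul0r.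
have K := key _ _ _ ip p0ge0 p01 mg g01 gx gz.
have ig : mu.-integrable `[0%R, 1%R] (EFin \o (fun x => p0 x * g x)).
  apply: intM => // x /= /[!in_itv] /= /g01 /andP[? ?].
  by rewrite ger0_norm.
have -> : Rintegral mu `[0%R, 1%R] (fun x => p0 x * G x) =
          Rintegral mu `[0%R, 1%R] (fun x => p0 x * g x) * G 1.
  have E : Rintegral mu `[0%R, 1%R] (fun x => p0 x * g x * G 1) =
      Rintegral mu `[0%R, 1%R] (fun x => p0 x * g x) * G 1.
    apply: RintegralZr; last exact: ig.
    exact: measurable_itv.
  rewrite -E; apply: eq_Rintegral => x _.
  by rewrite /g -mulrA divfK // gt_eqF.
by rewrite mulfK // gt_eqF.
Qed.
End S.



Lemma G0 (R : realType) (F : R -> R) : @G R F 0 = 0.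
Proof. by rewrite /G set_itv1 Rintegral_set1. Qed.

Lemma contF (R : realType) (c : R) : continuous (fun y : R => expR (c * y ^+ 2)).
Proof.
move=> x; apply: (@continuous_comp _ _ _ (fun y : R => c * y ^+ 2) expR).
  apply: (@continuousM _ _ (fun=> c) (fun y : R => y ^+ 2)).
    exact: cst_continuous.
  exact: exprn_continuous.
exact: continuous_expR.
Qed.

Theorem mainTheorem6 (R : realType) (alpha beta theta : R) (p0 : R -> R) :
  alpha < 0 -> 0 < beta ->
  0 <= theta <= 1 ->
  theta != beta / (beta - alpha) ->
  (lebesgue_measure).-integrable `[0%R, 1%R] (EFin \o p0) ->
  (forall x, x \in `[0%R, 1%R] -> 0 <= p0 x) ->
  (\int[lebesgue_measure]_(x in `[0%R, 1%R]) (p0 x)%:E = 1%:E)%E ->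
  pi1 alpha beta theta (beta / (beta - alpha)) p0 < pi1_neutral p0.
Proof.
move=> a0 b0 th01 thne ip p0ge0 p01.
set t2 := beta / (beta - alpha).
have ba : beta - alpha != 0 by rewrite gt_eqF // subr_gt0 (lt_trans a0).
have z : t2 * alpha + (1 - t2) * beta = 0 by rewrite /t2; field.
set c := - ((theta - t2) ^+ 2 * ((alpha - beta) / 2)).
have d0 : 0 < (theta - t2) ^+ 2.
  by rewrite lt_def sqrf_eq0 subr_eq0 thne sqr_ge0.
have c0 : 0 < c.
  rewrite /c -mulrN mulr_gt0 // -mulNr divr_gt0 //; lra.
have FE : Fth alpha beta theta t2 = fun y => expR (c * y ^+ 2).
  apply: funext => y; rewrite /Fth z mulr0 subr0 /c; congr expR; ring.
rewrite /pi1 /pi1_neutral FE.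
have Fp : forall y, 0 < expR (c * y ^+ 2) by move=> y; exact: expR_gt0.
have Fi : forall x y : R, 0 <= x -> x < y -> expR (c * x ^+ 2) < expR (c * y ^+ 2).
  move=> x y x0 xy; rewrite ltr_expR ltr_pM2l //.
  have y0 : 0 < y by apply: le_lt_trans xy.
  rewrite !expr2; apply: (le_lt_trans (y := x * y)).
    by rewrite ler_wpM2l // ltW.
  by rewrite ltr_pM2r.
have M := @main_sec R _ (@contF R c) Fp Fi p0 ip p0ge0 p01.
exact: M.
Qed.
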